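(* Let $B$ be the residue code of an extremal Type~II $\mathbb{Z}_4$-code of length $n$. If $n=32$ then $6\le \dim(B)\le 16$, and if $n=40$ then $7\le\dim(B)\le 20$.
   Context: A $\mathbb{Z}_4$-code of length $n$ is a $\mathbb{Z}_4$-submodule of $\mathbb{Z}_4^n$; it is self-dual if it equals its dual with respect to $x\cdot y=\sum x_iy_i \pmod 4$. The Euclidean weight of $x$ is $n_1(x)+4n_2(x)+n_3(x)$, $n_\alpha(x)$ being the number of coordinates equal to $\alpha$. A Type~II $\mathbb{Z}_4$-code is a self-dual code all of whose codewords have Euclidean weight divisible by $8$; it is extremal if its minimum Euclidean weight equals $8\lfloor n/24\rfloor+8$. The residue code is $C^{(1)}=\{c\bmod 2: c\in C\}$, a binary linear code; $\dim$ denotes its dimension over $\mathbb{F}_2$. *)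

(* Defs.v *)
From HB Require Import structures.
From mathcomp Require Import all_boot all_order all_algebra.
Set Implicit Arguments. Unset Strict Implicit. Unset Printing Implicit Defensive.
Import GRing.Theory.
Local Open Scope ring_scope.

(* A Z4-code: a Z4-submodule of Z4^n, i.e. an additive subgroup
   (Z4-scalar multiplication is iterated addition). *)
Definition is_Z4code n (C : {set 'rV['Z_4]_n}) : Prop :=
  0 \in C /\ (forall x y, x \in C -> y \in C -> x - y \in C).

Definition z4dot n (x y : 'rV['Z_4]_n) : 'Z_4 := \sum_(i < n) x ord0 i * y ord0 i.

Definition z4dual n (C : {set 'rV['Z_4]_n}) : {set 'rV['Z_4]_n} :=
  [set x | [forall c in C, z4dot x c == 0]].

Definition self_dual n (C : {set 'rV['Z_4]_n}) : Prop := C = z4dual C.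

Definition ncount n (a : 'Z_4) (x : 'rV['Z_4]_n) : nat := #|[set i | x ord0 i == a]|.

Definition euclid_wt n (x : 'rV['Z_4]_n) : nat :=
  (ncount 1%R x + 4 * ncount 2%R x + ncount 3%R x)%N.

Definition typeII n (C : {set 'rV['Z_4]_n}) : Prop :=
  is_Z4code C /\ self_dual C /\ (forall c, c \in C -> 8 %| euclid_wt c)%N.

Definition min_euclid_wt n (C : {set 'rV['Z_4]_n}) (d : nat) : Prop :=
  (exists2 c, c \in C & (c != 0%R) /\ euclid_wt c = d) /\
  (forall c, c \in C -> c != 0%R -> d <= euclid_wt c)%N.

Definition extremal_typeII n (C : {set 'rV['Z_4]_n}) : Prop :=
  typeII C /\ min_euclid_wt C (8 * (n %/ 24) + 8)%N.

Definition mod2 n (x : 'rV['Z_4]_n) : 'rV['F_2]_n :=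
  \row_i ((val (x ord0 i) %% 2)%N%:R : 'F_2).

Definition residue n (C : {set 'rV['Z_4]_n}) : {set 'rV['F_2]_n} := (@mod2 n) @: C.

Definition bdim n (B : {set 'rV['F_2]_n}) : nat := \dim (<<enum B>>%VS).

(* Main.v *)
Require Import Defs.
From mathcomp Require Import all_boot all_order all_algebra zify.

Section Helpers.
Set Implicit Arguments. Unset Strict Implicit. Unset Printing Implicit Defensive.
Import GRing.Theory.
Local Open Scope ring_scope.
Definition bdot n (u v : 'rV['F_2]_n) : 'F_2 := \sum_i u ord0 i * v ord0 i.

Lemma bdot_mx n (u v : 'rV['F_2]_n) : (u *m v^T) ord0 ord0 = bdot u v.
Proof. by rewrite mxE; apply: eq_bigr => i _; rewrite mxE. Qed.

Lemma bdotC n (u v : 'rV['F_2]_n) : bdot u v = bdot v u.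
Proof. by apply: eq_bigr => i _; rewrite mulrC. Qed.

Lemma span_orth n (X : seq 'rV['F_2]_n) w :
  (forall x, x \in X -> bdot x w = 0) -> forall v, v \in <<X>>%VS -> bdot v w = 0.
Proof.
move=> H v Hv; have := @coord_span _ _ _ (in_tuple X) v Hv => ->.
rewrite -bdot_mx mulmx_suml summxE; apply: big1 => i _.
rewrite -scalemxAl mxE bdot_mx H ?mulr0 //.
by apply: mem_nth; rewrite ltn_ord.
Qed.

Lemma rank_bounds n (B : {set 'rV['F_2]_n}) :
  (forall x y, x \in B -> y \in B -> bdot x y = 0) ->
  (2 * \dim <<enum B>> <= n)%N /\
  exists M : 'M['F_2]_(\dim <<enum B>>, n),
    forall u, u *m M^T = 0 -> forall b, b \in B -> bdot b u = 0.
Proof.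
move=> HB.
set V := <<enum B>>%VS.
set X := vbasis V.
have XV : <<X>>%VS = V := span_basis (vbasisP V).
have Vorth1 : forall b, b \in B -> forall u, u \in V -> bdot u b = 0.
  move=> b Hb u Hu; apply: (span_orth _ Hu) => x; rewrite mem_enum => Hx; exact: HB.
have Vorth : forall u v, u \in V -> v \in V -> bdot u v = 0.
  move=> u v Hu Hv; apply: (span_orth _ Hu) => x; rewrite mem_enum => Hx.
  by rewrite bdotC; apply: Vorth1.
have XinV : forall i : 'I_(\dim V), X`_i \in V.
  move=> i; apply: vbasis_mem; by apply: mem_nth; rewrite size_tuple ltn_ord.
pose M : 'M['F_2]_(\dim V, n) := \matrix_(i < \dim V) X`_i.
have rowM : forall i, row i M = X`_i by move=> i; rewrite rowK.
have Mfree : row_free M.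
  rewrite -kermx_eq0; apply/rowV0P => rk /sub_kermxP kt0.
  have Xfree : free X := basis_free (vbasisP V).
  move/freeP: Xfree => Xfree.
  apply/rowP => i; rewrite mxE; apply: (Xfree (fun j => rk ord0 j)) => //.
  transitivity (rk *m M); last exact: kt0. rewrite mulmx_sum_row; apply: eq_bigr => j _; by rewrite rowM.
split.
  have MMt : M *m M^T = 0.
    apply/matrixP => i j; rewrite !mxE.
    transitivity (bdot X`_i X`_j); last exact: Vorth (XinV i) (XinV j). apply: eq_bigr => l _.
    by rewrite !mxE.
  have : (M <= kermx M^T)%MS by apply/sub_kermxP.
  move/mxrankS; rewrite mxrank_ker mxrank_tr.
  move/eqP: Mfree => ->. rewrite mul2n -addnn. move=> H.
  lia.
exists M => u Hu b Hb.
have Hi : forall i : 'I_(\dim V), bdot u X`_i = 0.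
  move=> i; have := congr1 (fun A : 'M['F_2]_(1, \dim V) => A ord0 i) Hu; rewrite !mxE => <-.
  apply: eq_bigr => l _; by rewrite !mxE.
have : b \in <<X>>%VS by rewrite XV; apply: memv_span; rewrite mem_enum.
apply: span_orth => x /(nthP 0) [i Hi' <-].
rewrite size_tuple in Hi'; by rewrite bdotC (Hi (Ordinal Hi')).
Qed.

Lemma z4_nat (a : 'Z_4) : a = (val a)%:R.
Proof. by rewrite natr_Zp. Qed.

Lemma z4_nat0 N : ((N%:R : 'Z_4) = 0) <-> (4 %| N)%N.
Proof.
split => [H|H].
  have := val_Zp_nat (isT : (1 < 4)%N) N; rewrite H /= => /esym/eqP.
  by rewrite /dvdn.
apply/val_inj; rewrite /= val_Zp_nat //; by move/eqP: H => ->.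
Qed.

Lemma f2_nat0 N : ((N%:R : 'F_2) = 0) <-> (2 %| N)%N.
Proof.
split => [H|H].
  have := @val_Fp_nat 2 (isT : prime 2) N; rewrite H /= => /esym/eqP.
  by rewrite /dvdn.
apply/val_inj; rewrite /= val_Fp_nat //; by move/eqP: H => ->.
Qed.


Lemma z4dot_nat n (x y : 'rV['Z_4]_n) :
  z4dot x y = (\sum_i (val (x ord0 i) * val (y ord0 i)))%N%:R.
Proof.
rewrite /z4dot natr_sum; apply: eq_bigr => i _.
by rewrite natrM -!z4_nat.
Qed.

Lemma bdot_mod2 n (x y : 'rV['Z_4]_n) :
  bdot (mod2 x) (mod2 y) = (\sum_i (val (x ord0 i) * val (y ord0 i)))%N%:R.
Proof.
rewrite /bdot natr_sum; apply: eq_bigr => i _.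
by rewrite !mxE natrM !Fp_nat_mod.
Qed.

Definition bwt n (w : 'rV['F_2]_n) : nat := #|[set i | w ord0 i != 0]|.

Lemma count_bound m k (M : 'M['F_2]_(k, m.+1)) :
  (forall w : 'rV['F_2]_m.+1, w *m M^T = 0 -> w != 0 -> (4 <= bwt w)%N) ->
  (2 * m.+1 <= 2 ^ k)%N.
Proof.
move=> HP.
pose g (p : bool * 'I_m.+1) : 'rV['F_2]_m.+1 :=
  (p.1 : nat)%:R *: delta_mx 0 ord0 + delta_mx 0 p.2.
have gE : forall p j, g p ord0 j = (p.1 : nat)%:R * (j == ord0)%:R + (j == p.2)%:R.
  by move=> p j; rewrite !mxE eqxx.
have one0 : (1 : 'F_2) != 0 by [].
have ginj : injective g.
  move=> [b i] [c j] E.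
  have E' : forall l, g (b, i) ord0 l = g (c, j) ord0 l by move=> l; rewrite E.
  have ij : i = j.
    case: (eqVneq i j) => // nij.
    have [i0|inz] := boolP (i == ord0).
      have jnz : j != ord0 by move/eqP: i0 => <-; rewrite eq_sym.
      have := E' j; rewrite !gE /= (eq_sym j i) (negbTE nij) eqxx.
      rewrite (negbTE jnz) !mulr0 !add0r => /eqP; by [].
    have := E' i; rewrite !gE /= (negbTE nij) eqxx (negbTE inz) !mulr0 !add0r => /eqP; by [].
  subst j; congr (_, _).
  have := E' ord0; rewrite !gE /= => /addIr.
  by clear E E'; case: b; case: c => // /eqP.
pose h p := g p *m M^T.
have hinj : injective h.
  move=> p q E; apply: ginj; apply/eqP; rewrite -subr_eq0; apply/negPn/negP => nz.
  have := HP (g p - g q); rewrite mulmxBl -/(h p) -/(h q) E subrr => /(_ erefl nz).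
  suff : (bwt (g p - g q) <= 3)%N by lia.
  have : [set i | (g p - g q) ord0 i != 0] \subset [:: ord0; p.2; q.2].
    apply/subsetP => l; rewrite inE !mxE !inE eqxx.
    case: (l =P ord0) => // _; case: (l =P p.2) => // _; case: (l =P q.2) => //= _.
    by rewrite !mulr0 !addr0 subrr eqxx.
  move/subset_leq_card => H; apply: (leq_trans H).
  exact: (card_size [:: ord0; p.2; q.2]).
have := @leq_card _ _ h hinj.
by rewrite card_prod card_bool card_ord card_mx card_Fp // mul1n.
Qed.

Lemma f2_cases (x : 'F_2) : x = 0 \/ x = 1.
Proof. by case: x => [[|[|]]] //= H; [left|right]; apply/val_inj. Qed.

Lemma residue_orth n (C : {set 'rV['Z_4]_n}) :
  self_dual C -> forall x y, x \in residue C -> y \in residue C -> bdot x y = 0.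
Proof.
move=> sd x y /imsetP [c Hc ->] /imsetP [d Hd ->].
have : c \in z4dual C by rewrite -sd.
rewrite inE => /forall_inP /(_ d Hd) /eqP.
rewrite z4dot_nat bdot_mod2 => /z4_nat0 H4.
by apply/f2_nat0; apply: dvdn_trans H4.
Qed.

Definition lift2 n (w : 'rV['F_2]_n) : 'rV['Z_4]_n :=
  \row_i (if w ord0 i == 0 then 0 else 2).

Lemma lift2_in n (C : {set 'rV['Z_4]_n}) (w : 'rV['F_2]_n) :
  self_dual C -> (forall b, b \in residue C -> bdot b w = 0) -> lift2 w \in C.
Proof.
move=> sd Hw; rewrite sd inE; apply/forall_inP => c Hc.
have := Hw (mod2 c) (imset_f _ Hc).
pose N := (\sum_i (if w ord0 i == 0%R then 0 else val (c ord0 i)))%N.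
have E2 : bdot (mod2 c) w = N%:R.
  rewrite /bdot /N natr_sum; apply: eq_bigr => i _; rewrite mxE.
  by case: (f2_cases (w ord0 i)) => ->; rewrite ?mulr0 ?mulr1 ?Fp_nat_mod.
have E4 : z4dot (lift2 w) c = (2 * N)%N%:R.
  rewrite /z4dot /N big_distrr /= natr_sum; apply: eq_bigr => i _; rewrite mxE.
  case: (w ord0 i == 0); first by rewrite mul0r muln0.
  by rewrite natrM -z4_nat.
rewrite E2 E4 => /f2_nat0 H2; apply/eqP/z4_nat0.
by rewrite (_ : 4 = 2 * 2)%N // dvdn_pmul2l.
Qed.

Lemma lift2_wt n (w : 'rV['F_2]_n) : euclid_wt (lift2 w) = (4 * bwt w)%N.
Proof.
rewrite /euclid_wt /ncount.
have -> : [set i | lift2 w ord0 i == 1] = set0.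
  by apply/setP => i; rewrite !inE mxE; case: (w ord0 i == 0).
have -> : [set i | lift2 w ord0 i == 3%:R] = set0.
  by apply/setP => i; rewrite !inE mxE; case: (w ord0 i == 0).
have -> : [set i | lift2 w ord0 i == 2%:R] = [set i | w ord0 i != 0].
  by apply/setP => i; rewrite !inE mxE; case: (w ord0 i == 0).
by rewrite cards0 addn0.
Qed.

Lemma lift2_nz n (w : 'rV['F_2]_n) : w != 0 -> lift2 w != 0.
Proof.
apply: contraNneq => H; apply/eqP/rowP => i.
have := congr1 (fun A : 'rV['Z_4]_n => A ord0 i) H; rewrite !mxE.
by case: eqP => // _.
Qed.

Lemma wt_bound n (C : {set 'rV['Z_4]_n}) :
  extremal_typeII C -> (16 <= 8 * (n %/ 24) + 8)%N ->
  forall w : 'rV['F_2]_n, (forall b, b \in residue C -> bdot b w = 0) ->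
  w != 0 -> (4 <= bwt w)%N.
Proof.
move=> [[_ [sd _]] [_ Hmin]] H16 w Hw wnz.
have := Hmin _ (lift2_in sd Hw) (lift2_nz wnz).
rewrite lift2_wt; lia.
Qed.

End Helpers.

Theorem mainTheorem2 (n : nat) (C : {set 'rV['Z_4]_n}) :
  extremal_typeII C ->
  (n = 32 -> 6 <= bdim (residue C) <= 16)%N /\
  (n = 40 -> 7 <= bdim (residue C) <= 20)%N.
Proof.
move=> HC.
have sd : self_dual C by case: HC => [[_ [sd _]] _].
have [Hup [M HM]] := rank_bounds (residue_orth sd).
have key : forall m (e : n = m.+1), (16 <= 8 * (n %/ 24) + 8)%N ->
    (2 * n <= 2 ^ bdim (residue C))%N.
  move=> m e H16; move: M HM; rewrite /bdim; subst n => M HM.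
  apply: (count_bound (M := M)) => w Hw wnz.
  exact: (wt_bound HC H16 (HM w Hw) wnz).
have {}Hup : (2 * bdim (residue C) <= n)%N := Hup.
split => en.
  have H := key 31 en ltac:(by rewrite en).
  have H6 : (2 ^ 6 <= 2 ^ bdim (residue C))%N by apply: leq_trans H; rewrite en.
  rewrite leq_exp2l // in H6; apply/andP; split => //; lia.
have H := key 39 en ltac:(by rewrite en).
have H6 : (2 ^ 7 <= 2 ^ bdim (residue C))%N.
  have : (2 ^ 6 < 2 ^ bdim (residue C))%N by apply: leq_trans H; rewrite en.
  by rewrite ltn_exp2l // leq_exp2l.
rewrite leq_exp2l // in H6; apply/andP; split => //; lia.
Qed.
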